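(* For every $n\ge 2$ there exist nonnegative numbers $\gamma_{n,i}$ such that $$\mathcal{A}_n^{(2)}(t):=\sum_{k=0}^{n-1}\mathcal{A}^{(2)}(n,k)\,t^k=\sum_{i=0}^{\lfloor (n-1)/2\rfloor}\gamma_{n,i}\,t^i(1+t)^{n-1-2i}.$$
   Context: A subexceedant function on $[n]$ is a map $f:[n]\to[n]$ with $1\le f(i)\le i$; its block leader set is $\mathrm{bl}(f)=\{i\in[n]: f(i)\notin f(\{1,\dots,i-1\})\}$. $\mathcal{A}^{(2)}(n,k)$ is the number of pairs $(f_1,f_2)$ of subexceedant functions on $[n]$ with $|\mathrm{bl}(f_1)|=k+1$ and $\mathrm{bl}(f_1)=\mathrm{bl}(f_2)$. *)

(* Defs.v *)
From HB Require Import structures.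
From mathcomp Require Import all_boot all_order all_algebra.
Set Implicit Arguments. Unset Strict Implicit. Unset Printing Implicit Defensive.
Import Order.TTheory GRing.Theory Num.Theory.

(* [n] = {1,...,n} is represented 0-indexed by 'I_n (element i stands for i+1).
   A subexceedant function f : [n] -> [n], 1 <= f(i) <= i, becomes
   f : 'I_n -> 'I_n with f i <= i. *)
Definition subexceedant (n : nat) (f : {ffun 'I_n -> 'I_n}) : bool :=
  [forall i, (f i <= i)%N].

Definition block_leaders (n : nat) (f : {ffun 'I_n -> 'I_n}) : {set 'I_n} :=
  [set i | f i \notin f @: [set j : 'I_n | (j < i)%N]].

Definition A2 (n k : nat) : nat :=
  #|[set p : {ffun 'I_n -> 'I_n} * {ffun 'I_n -> 'I_n} |
      [&& subexceedant p.1, subexceedant p.2,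
          #|block_leaders p.1| == k.+1 &
          block_leaders p.1 == block_leaders p.2]]|.

(* Main.v *)
Require Import Defs.
From HB Require Import structures.
From mathcomp Require Import all_boot all_order all_algebra.
Import Order.TTheory GRing.Theory Num.Theory.
From mathcomp Require Import ring zify.
Set Implicit Arguments. Unset Strict Implicit. Unset Printing Implicit Defensive.

Lemma blP m (f : {ffun 'I_m -> 'I_m}) i :
  (i \in block_leaders f) = [forall j : 'I_m, (j < i)%N ==> (f j != f i)].
Proof.
rewrite inE; apply/negP/forallP => [H j | H /imsetP [j]].
- apply/implyP => ji; apply/eqP => e; apply: H; apply/imsetP; exists j; rewrite ?inE // e.
- rewrite inE => ji e; move: (H j); by rewrite ji e eqxx.
Qed.

Definition ext m (g : {ffun 'I_m -> 'I_m}) (v : 'I_m.+1) : {ffun 'I_m.+1 -> 'I_m.+1} :=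
  [ffun i => if unlift ord_max i is Some j then lift ord_max (g j) else v].

Lemma ext_lift m g v j : @ext m g v (lift ord_max j) = lift ord_max (g j).
Proof. by rewrite ffunE liftK. Qed.
Lemma ext_max m g v : @ext m g v ord_max = v.
Proof. by rewrite ffunE unlift_none. Qed.

Lemma forall_max m (P : pred 'I_m.+1) :
  [forall x, P x] = P ord_max && [forall j, P (lift ord_max j)].
Proof.
apply/forallP/andP => [H|[H1 /forallP H2] x]; first by split=> //; apply/forallP.
by case: (unliftP ord_max x) => [j ->|->].
Qed.

Lemma bump_max m (k : 'I_m) : bump m k = k.
Proof. by rewrite /bump leqNgt ltn_ord. Qed.

Definition newv m (g : {ffun 'I_m -> 'I_m}) (v : 'I_m.+1) :=
  [forall j, lift ord_max (g j) != v].

Lemma bl_ext_lift m g v j :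
  (lift ord_max j \in block_leaders (@ext m g v)) = (j \in block_leaders g).
Proof.
rewrite !blP forall_max ext_max ext_lift.
have -> : (@ord_max m < lift ord_max j)%N = false.
  by rewrite lift_max ltnNge /= ltnW.
rewrite /=; apply: eq_forallb => j'.
have bm : forall k : 'I_m, bump m k = k by move=> k; rewrite /bump leqNgt ltn_ord.
by rewrite !ext_lift !bm (inj_eq (@lift_inj _ ord_max)).
Qed.

Lemma bl_ext_max m g v :
  (ord_max \in block_leaders (@ext m g v)) = newv g v.
Proof.
rewrite blP forall_max ltnn /=; apply: eq_forallb => j.
by rewrite ext_lift ext_max ?lift_max ?bump_max ltn_ord.
Qed.

Lemma bl_ext_eq m g1 g2 v1 v2 :
  (block_leaders (@ext m g1 v1) == block_leaders (ext g2 v2)) =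
  (block_leaders g1 == block_leaders g2) && (newv g1 v1 == newv g2 v2).
Proof.
apply/eqP/andP => [E|[/eqP E /eqP N]].
- split; last by rewrite -!bl_ext_max E.
  apply/eqP/setP => j; by rewrite -(bl_ext_lift g1 v1) -(bl_ext_lift g2 v2) E.
- apply/setP => x; case: (unliftP ord_max x) => [j ->|->].
    by rewrite !bl_ext_lift E.
  by rewrite !bl_ext_max N.
Qed.

Lemma sum_bool_card (T : finType) (P : pred T) :
  \sum_x (P x : nat) = #|[set x | P x]|.
Proof.
rewrite -sum1_card [in RHS]big_mkcond /=; apply: eq_bigr => x _; rewrite inE; by case: (P x).
Qed.

Lemma card_split m (A : {set 'I_m.+1}) :
  #|A| = (ord_max \in A) + #|[set j : 'I_m | lift ord_max j \in A]|.
Proof.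
rewrite -sum1_card big_mkcond big_ord_recr /= addnC; congr (_ + _).
rewrite -sum_bool_card; apply: eq_bigr => j _.
have -> : widen_ord (leqnSn m) j = lift ord_max j by apply: val_inj; rewrite /= bump_max.
by case: (_ \in A).
Qed.

Lemma card_bl_ext m g v :
  #|block_leaders (@ext m g v)| = #|block_leaders g| + newv g v.
Proof.
rewrite card_split bl_ext_max addnC; congr (_ + _).
by apply: eq_card => j; rewrite inE bl_ext_lift.
Qed.

Lemma img_bl m (f : {ffun 'I_m -> 'I_m}) : #|f @: setT| = #|block_leaders f|.
Proof.
have -> : f @: setT = f @: block_leaders f.
  apply/eqP; rewrite eqEsubset [X in _ && X]imsetS ?subsetT // andbT.
  apply/subsetP => y /imsetP [x _ ->].
  have H : forall k (x : 'I_m), (x < k)%N -> f x \in f @: block_leaders f.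
    elim=> [|k IH] x0 //; rewrite ltnS => xk.
    case: (boolP (x0 \in block_leaders f)) => [xb|]; first exact: imset_f.
    rewrite blP negb_forall => /existsP [j]; rewrite negb_imply negbK => /andP [jx /eqP <-].
    by apply: IH; exact: leq_trans jx xk.
  exact: (H x.+1).
apply: card_in_imset => x y; rewrite !blP => /forallP Hx /forallP Hy e.
case: (ltngtP x y) => [xy|yx|/val_inj //].
  by move: (Hy x); rewrite xy e eqxx.
by move: (Hx y); rewrite yx e eqxx.
Qed.

Lemma card_old m (g : {ffun 'I_m -> 'I_m}) :
  #|[set v : 'I_m.+1 | ~~ newv g v]| = #|block_leaders g|.
Proof.
have -> : [set v : 'I_m.+1 | ~~ newv g v] = (lift ord_max \o g) @: setT.
  apply/setP => v; rewrite inE negb_forall; apply/existsP/imsetP => [[j]|[j _ ->]].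
    by rewrite negbK => /eqP <-; exists j.
  by exists j; rewrite negbK.
by rewrite imset_comp card_imset ?img_bl //; exact: lift_inj.
Qed.

Lemma sum_newv m (g : {ffun 'I_m -> 'I_m}) (F : bool -> nat) :
  \sum_(v : 'I_m.+1) F (newv g v) =
  F true * (m.+1 - #|block_leaders g|) + F false * #|block_leaders g|.
Proof.
have S : \sum_(v : 'I_m.+1) (newv g v : nat) + \sum_(v : 'I_m.+1) (~~ newv g v : nat) = m.+1.
  rewrite -big_split /= -[in RHS](card_ord m.+1) -sum1_card; apply: eq_bigr => v _.
  by case: newv.
have S2 : \sum_(v : 'I_m.+1) (~~ newv g v : nat) = #|block_leaders g|.
  by rewrite sum_bool_card card_old.
have S1 : \sum_(v : 'I_m.+1) (newv g v : nat) = m.+1 - #|block_leaders g|.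
  by rewrite -[in RHS]S S2 addnK.
rewrite -S1 -S2 !big_distrr /= -big_split /=; apply: eq_bigr => v _.
by case: newv; rewrite /= ?muln1 ?muln0 ?addn0.
Qed.

Definition restr m (f : {ffun 'I_m.+1 -> 'I_m.+1}) : {ffun 'I_m -> 'I_m} :=
  [ffun j => insubd j (val (f (lift ord_max j)))].

Lemma subexc_ext m g v : subexceedant (@ext m g v) = subexceedant g.
Proof.
rewrite /subexceedant forall_max ext_max leq_ord /=.
by apply: eq_forallb => j; rewrite ext_lift ?lift_max ?bump_max.
Qed.

Lemma sum_ext m (F : {ffun 'I_m.+1 -> 'I_m.+1} -> nat) :
  \sum_(f | subexceedant f) F f =
  \sum_(g : {ffun 'I_m -> 'I_m} | subexceedant g) \sum_(v : 'I_m.+1) F (ext g v).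
Proof.
rewrite (pair_big_dep _ (fun _ _ => true) (fun g v => F (ext g v))) /=.
rewrite (reindex_onto (fun p => ext p.1 p.2) (fun f => (restr f, f ord_max))) /=.
  apply: eq_bigl => [[g v]] /=; rewrite subexc_ext ext_max andbT.
  have -> : restr (ext g v) = g.
    apply/ffunP => j; apply: val_inj; rewrite ffunE val_insubd ext_lift /= bump_max ltn_ord //.
  by rewrite eqxx andbT.
move=> f /forallP Hf; apply/ffunP => i; case: (unliftP ord_max i) => [j ->|->].
  rewrite ext_lift; apply: val_inj; rewrite /= bump_max ffunE val_insubd.
  have := Hf (lift ord_max j); rewrite ?lift_max ?bump_max => h.
  by rewrite (leq_ltn_trans h (ltn_ord j)).
by rewrite ext_max.
Qed.

Definition B m u : nat :=
  \sum_(f1 : {ffun 'I_m -> 'I_m} | subexceedant f1)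
   \sum_(f2 : {ffun 'I_m -> 'I_m} | subexceedant f2)
     ((#|block_leaders f1| == u) && (block_leaders f1 == block_leaders f2)).

Lemma B_step m u : B m.+1 u =
  \sum_(g1 : {ffun 'I_m -> 'I_m} | subexceedant g1)
   \sum_(g2 : {ffun 'I_m -> 'I_m} | subexceedant g2)
     (block_leaders g1 == block_leaders g2) *
     ((#|block_leaders g1|.+1 == u) * (m.+1 - #|block_leaders g1|) ^ 2 +
      (#|block_leaders g1| == u) * #|block_leaders g1| ^ 2).
Proof.
rewrite /B sum_ext; apply: eq_bigr => g1 _.
under eq_bigr do rewrite sum_ext.
rewrite exchange_big /=; apply: eq_bigr => g2 _.
under eq_bigr do under eq_bigr do rewrite card_bl_ext bl_ext_eq.
case: (boolP (block_leaders g1 == block_leaders g2)) => [/eqP E|_]; last first.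
  by rewrite mul0n big1 // => v1 _; rewrite big1 // => v2 _; rewrite andbF.
rewrite mul1n.
under eq_bigr => v1 _ do rewrite (sum_newv g2 (fun b => [&& #|block_leaders g1| + newv g1 v1 == u, true & newv g1 v1 == b])).
rewrite -E.
rewrite (sum_newv g1 (fun b1 => [&& #|block_leaders g1| + b1 == u, true & b1 == true] * (m.+1 - #|block_leaders g1|) + [&& #|block_leaders g1| + b1 == u, true & b1 == false] * #|block_leaders g1|)) /=.
rewrite addn1 addn0.
by case: (_ == u); case: (_ == u); rewrite /= ?mul1n ?mul0n ?muln1 ?muln0 ?add0n ?addn0 ?mulnA.
Qed.

Lemma B_rec0 m : B m.+1 0 = 0.
Proof.
rewrite B_step big1 // => g1 _; rewrite big1 // => g2 _.
by case: (boolP (#|block_leaders g1| == 0)) => [/eqP ->|]; rewrite /= ?mul0n ?muln0 ?add0n ?addn0.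
Qed.

Lemma B_rec m u : B m.+1 u.+1 = (m.+1 - u) ^ 2 * B m u + u.+1 ^ 2 * B m u.+1.
Proof.
rewrite B_step /B !big_distrr -big_split /=; apply: eq_bigr => g1 _.
rewrite !big_distrr -big_split /=; apply: eq_bigr => g2 _.
rewrite eqSS; case: (boolP (#|block_leaders g1| == u)) => [/eqP ->|ne].
  by rewrite (ltn_eqF (ltnSn u)) /=; case: (block_leaders g1 == _); rewrite /= ?mul1n ?mul0n ?muln1 ?muln0 ?addn0.
case: (boolP (#|block_leaders g1| == u.+1)) => [/eqP ->|ne2]; last by rewrite /= !muln0.
by rewrite /=; case: (block_leaders g1 == _); rewrite /= ?mul1n ?mul0n ?muln1 ?muln0 ?addn0 ?add0n.
Qed.

Lemma B0 u : B 0 u = (u == 0).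
Proof.
rewrite /B.
have sx : forall f : {ffun 'I_0 -> 'I_0}, subexceedant f by move=> f; apply/forallP => [[]].
have bl0 : forall f : {ffun 'I_0 -> 'I_0}, block_leaders f = set0 by move=> f; apply/setP => [[]].
under eq_bigl do rewrite sx. under eq_bigr do under eq_bigl do rewrite sx.
under eq_bigr do under eq_bigr do rewrite !bl0 cards0 eqxx andbT.
rewrite sum_nat_const sum_nat_const card_ffun !card_ord /= eq_sym.
by case: (u == 0).
Qed.

Lemma B_big m u : (m < u)%N -> B m u = 0.
Proof.
move=> mu; rewrite /B big1 // => f1 _; rewrite big1 // => f2 _.
have : (#|block_leaders f1| <= m)%N by rewrite -[m in (_ <= m)%N]card_ord max_card.
by move=> h; rewrite (ltn_eqF (leq_ltn_trans h mu)).
Qed.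

Lemma A2_B m k : A2 m k = B m k.+1.
Proof.
rewrite /A2 -sum_bool_card.
rewrite -(pair_big xpredT xpredT (fun f1 f2 : {ffun 'I_m -> 'I_m} => ([&& subexceedant f1, subexceedant f2, #|block_leaders f1| == k.+1 & block_leaders f1 == block_leaders f2] : nat))) /=.
rewrite /B [in RHS]big_mkcond; apply: eq_bigr => f1 _; rewrite [in RHS]big_mkcond /=.
case: (subexceedant f1); last by rewrite big1.
by apply: eq_bigr => f2 _; case: (subexceedant f2).
Qed.

Local Open Scope ring_scope.

Definition Dop (p : {poly rat}) : {poly rat} := 'X * p^`().

Lemma coef_Dop p k : (Dop p)`_k = k%:R * p`_k.
Proof. by rewrite /Dop coefXM coef_deriv; case: k => [|k]; rewrite ?mul0r //= mulr_natl. Qed.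

Lemma DopD p q : Dop (p + q) = Dop p + Dop q.
Proof. by rewrite /Dop derivD mulrDr. Qed.
Lemma DopC c p : Dop (c%:P * p) = c%:P * Dop p.
Proof. by rewrite /Dop !mul_polyC derivZ scalerAr. Qed.
Lemma DopM p q : Dop (p * q) = Dop p * q + p * Dop q.
Proof. rewrite /Dop derivM; ring. Qed.
Lemma Dop_nat c p : Dop (c%:R * p) = c%:R * Dop p.
Proof. by rewrite /Dop !mulr_natl derivMn mulrnAr. Qed.
Lemma Dop_Xn i : Dop ('X^i) = i%:R * 'X^i.
Proof.
rewrite /Dop derivXn; case: i => [|i]; first by rewrite mulr0n mulr0 mul0r.
by rewrite mulrnAr -exprS -mulr_natl.
Qed.
Lemma Dop_X : Dop 'X = 'X.
Proof. by rewrite /Dop derivX mulr1. Qed.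
Lemma Dop_s : Dop (1 + 'X) = 'X.
Proof. by rewrite /Dop derivD -polyC1 derivC derivX add0r mulr1. Qed.
Lemma Dop1 : Dop 1 = 0.
Proof. by rewrite /Dop -polyC1 derivC mulr0. Qed.

Lemma sDop_pow j : (1 + 'X) * Dop ((1 + 'X) ^+ j) = j%:R * ('X * (1 + 'X) ^+ j).
Proof.
elim: j => [|j IH]; first by rewrite expr0 Dop1 mulr0 mul0r.
rewrite exprS DopM Dop_s mulrDr.
rewrite IH -addn1 natrD; ring.
Qed.

Definition Lop (n : nat) (p : {poly rat}) : {poly rat} :=
  Dop (Dop p) + 2%:R * Dop p + p +
  'X * ((n * n)%:R * p - (2 * n)%:R * Dop p + Dop (Dop p)).

Lemma Lop_core i j :
  Lop (2 * i + j)%N.+1 ('X^i * (1 + 'X) ^+ j) =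
  (i.+1 * i.+1)%N%:R * ('X^i * (1 + 'X) ^+ j.+1) +
  (j * (4 * i + j + 5))%N%:R * ('X^(i.+1) * (1 + 'X) ^+ j.-1).
Proof.
set s : {poly rat} := 1 + 'X; set a : {poly rat} := 'X^i; set b : {poly rat} := s ^+ j.
set d1 := Dop b; set d2 := Dop d1.
have H1 : s * d1 = j%:R * ('X * b) by exact: sDop_pow.
have H2 : s * d2 = j%:R * ('X * b) + (j%:R - 1) * ('X * d1).
  have := congr1 Dop H1; rewrite DopM Dop_s Dop_nat DopM Dop_X -/d2 => h.
  apply: (addrI ('X * d1)); rewrite h -/d1. ring.
have H3 : s * (s * d2) = j%:R * ('X * b) * s + (j%:R - 1) * 'X * (j%:R * ('X * b)).
  rewrite H2 mulrDr -H1; ring.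
have Df : Dop (a * b) = i%:R * a * b + a * d1 by rewrite DopM Dop_Xn.
have DDf : Dop (Dop (a * b)) = i%:R * i%:R * a * b + 2%:R * i%:R * a * d1 + a * d2.
  rewrite Df DopD DopM -mulrA Dop_nat Dop_Xn DopM Dop_Xn -/d2 -/a -/d1; ring.
have s0 : s != 0.
  apply/eqP => /(congr1 (fun p => p.[0])); rewrite /s !hornerE; apply/eqP; exact: oner_neq0.
apply: (mulfI s0).
have T : s * ((j * (4 * i + j + 5))%N%:R * ('X^(i.+1) * s ^+ j.-1)) =
         (j * (4 * i + j + 5))%N%:R * ('X * a * b).
  rewrite /b /a; case: j {H1 H2 H3 DDf Df d1 d2 b} => [|j]; first by rewrite !mul0n !mul0r mulr0.
  rewrite exprS exprS /=; ring.
rewrite [in RHS]mulrDr T.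
transitivity (a * (s * (s * d2)) + (2%:R * i%:R * a + 2%:R * a + 'X * (2%:R * i%:R * a - 2%:R * (2 * i + j)%N.+1%:R * a)) * (s * d1)
   + s * a * ((i.+1 * i.+1)%N%:R + 'X * ((i + j).+1 * (i + j).+1)%N%:R) * b).
  rewrite /Lop DDf Df; rewrite /s; ring.
rewrite H3 H1 exprS -/b /s; ring.
Qed.

Lemma LopD n p q : Lop n (p + q) = Lop n p + Lop n q.
Proof. rewrite /Lop !DopD; ring. Qed.
Lemma Lop0 n : Lop n 0 = 0.
Proof.
have D0 : Dop 0 = 0 by rewrite /Dop deriv0 mulr0.
by rewrite /Lop !D0 !mulr0 !addr0 subrr add0r mulr0.
Qed.
Lemma LopZ n c p : Lop n (c *: p) = c *: Lop n p.
Proof. rewrite -!mul_polyC /Lop !DopC; ring. Qed.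

Lemma Lop_sum n N (F : 'I_N -> {poly rat}) :
  Lop n (\sum_(i < N) F i) = \sum_(i < N) Lop n (F i).
Proof.
apply: (big_ind2 (fun x y => Lop n x = y)) => //; first exact: Lop0.
by move=> x1 x2 y1 y2 <- <-; rewrite LopD.
Qed.

Lemma coef_natM c (p : {poly rat}) k : (c%:R * p)`_k = c%:R * p`_k.
Proof. by rewrite !mulr_natl coefMn. Qed.

Definition P m : {poly rat} := \poly_(k < m) (B m k.+1)%:R.

Lemma coef_P m k : (P m)`_k = (B m k.+1)%:R.
Proof.
rewrite coef_poly; case: ltnP => // h.
by rewrite B_big.
Qed.

Lemma P_rec m : P m.+2 = Lop m.+1 (P m.+1).
Proof.
apply/polyP => k.
rewrite coef_P /Lop !coefD !coef_natM !coef_Dop coefXM.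
case: k => [|k].
  rewrite /= !coef_P B_rec B_rec0 muln0 add0n mul1n. ring.
rewrite /= !coefD coefN !coef_natM !coef_Dop !coef_P /= B_rec.
have [le|gt] := leqP k m.+1.
  rewrite subSS natrD !natrM natrB //. ring.
rewrite (B_big (leqW gt)) muln0 add0n. ring.
Qed.


Definition bas m i : {poly rat} := 'X^i * (1 + 'X) ^+ (m - i.*2)%N.

Fixpoint gam (m i : nat) : nat :=
  match m with
  | 0 => (i == 0)%N
  | m'.+1 => (i.+1 * i.+1 * gam m' i +
              (if i is i'.+1 then (m' - i'.*2) * (m' + i'.*2 + 5) * gam m' i' else 0))%N
  end.

Lemma gam_vanish m i : (m < i.*2)%N -> gam m i = 0%N.
Proof.
elim: m i => [|m IH] [|i] //= h.
rewrite IH ?muln0 ?add0n; last by apply: ltnW.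
have [lt|ge] := ltnP m i.*2; first by rewrite IH // muln0.
rewrite doubleS !ltnS in h.
by rewrite (_ : m - i.*2 = 0)%N ?mul0n //; apply/eqP; rewrite subn_eq0.
Qed.

Lemma Lop_bas m i : (i.*2 <= m)%N ->
  Lop m.+1 (bas m i) = (i.+1 * i.+1)%N%:R *: bas m.+1 i +
     ((m - i.*2) * (m + i.*2 + 5))%N%:R *: bas m.+1 i.+1.
Proof.
move=> h; rewrite /bas.
set j := (m - i.*2)%N.
have em : m = (2 * i + j)%N by rewrite /j; lia.
have e1 : (m.+1 - i.*2 = j.+1)%N by rewrite /j; lia.
have e2 : (m.+1 - (i.+1).*2 = j.-1)%N by rewrite /j; lia.
have e3 : ((m - i.*2) * (m + i.*2 + 5) = j * (4 * i + j + 5))%N by rewrite /j; nia.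
rewrite e1 e2 e3 -/j em Lop_core -!mul_polyC !polyC_natr.
by [].
Qed.

Lemma P_gam m : P m.+1 = \sum_(i < m.+1) (gam m i)%:R *: bas m i.
Proof.
elim: m => [|m IH].
  rewrite /P poly_def !big_ord1 /bas /= B_rec !B0 /=.
  by rewrite expr0 mulr1.
rewrite P_rec IH Lop_sum.
under eq_bigr => i _ do rewrite LopZ.
transitivity (\sum_(i < m.+1) ((i.+1 * i.+1 * gam m i)%N%:R *: bas m.+1 i +
   ((m - i.*2) * (m + i.*2 + 5) * gam m i)%N%:R *: bas m.+1 i.+1)).
  apply: eq_bigr => i _; case: (leqP (i.*2) m) => h.
    by rewrite Lop_bas // scalerDr !scalerA -!natrM (mulnC (gam m i)) (mulnC (gam m i)).
  by rewrite gam_vanish // !muln0 !mulr0n !scale0r addr0.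
rewrite big_split /=.
under [in RHS]eq_bigr => i _ do rewrite natrD scalerDl.
rewrite big_split /=; congr (_ + _).
  rewrite [in RHS]big_ord_recr /= gam_vanish; last by rewrite -addnn; lia.
  by rewrite !muln0 mulr0n scale0r addr0.
rewrite [in RHS]big_ord_recl /= mulr0n scale0r add0r.
by apply: eq_bigr => i _; rewrite !add0n /bump leq0n.
Qed.

Unset Implicit Arguments.
Unset Strict Implicit.

Theorem mainTheorem16 (n : nat) (hn : (2 <= n)%N) :
  exists gamma : nat -> rat,
    (forall i, 0 <= gamma i) /\
    \sum_(k < n) (A2 n k)%:R *: 'X^k =
    \sum_(i < (n.-1)./2.+1) gamma i *: ('X^i * (1 + 'X) ^+ (n.-1 - i.*2)%N)
      :> {poly rat}.
Proof.
case: n hn => [|m] // _.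
exists (fun i => (gam m i)%:R); split; first by move=> i; exact: ler0n.
have -> : \sum_(k < m.+1) (A2 m.+1 k)%:R *: 'X^k = P m.+1.
  by rewrite /P poly_def; apply: eq_bigr => k _; rewrite A2_B.
rewrite P_gam /=.
rewrite /bas [in RHS](big_ord_widen m.+1 (fun i => (gam m i)%:R *: ('X^i * (1 + 'X) ^+ (m - i.*2)%N))); last first.
  by rewrite ltnS -divn2 leq_div.
rewrite [in RHS]big_mkcond; apply: eq_bigr => i _; case: ifP => // h.
rewrite gam_vanish ?mulr0n ?scale0r //.
by rewrite -ltn_half_double ltnNge -ltnS h.
Qed.
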